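(* Fix $\beta_0\in\mathbb{R}$ and $\beta=(\beta_1,\dots,\beta_d)\in\mathbb{R}^d$ with $\|\beta\|\ne0$. Let $f:\mathbb{R}^d\to\mathbb{R}$ be defined by $f(x)=f_0(\varphi(x))$, where $f_0:\mathbb{R}\to\mathbb{R}$ and $\varphi(x)=\beta_0+\langle\beta,x\rangle$. Let $g(x,x')=g_0(\|x-x'\|)$ be a smooth growth function, let $x\in\mathbb{R}^d$, and let $(w^*,z^* )$ with $w^*\ne z^*$ be such that $B^*(x)=\frac{|f(w^* )-f(z^* )|}{\|w^*-z^*\|\,g(x,z^* )}$. Then there exist $a,c\in\mathbb{R}$ such that, with $z_c:=x+\frac{c}{\|\beta\|}\beta$ and $w_a:=z_c+\frac{a}{\|\beta\|}\beta$, one has $\frac{|f(w_a)-f(z_c)|}{\|w_a-z_c\|\,g(x,z_c)}\ge B^*(x)$.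
   Context: $\mathbb{R}^d$ carries the Euclidean norm $\|\cdot\|$. A smooth growth function is $g(x,x')=g_0(\|x-x'\|)$ with $g_0:\mathbb{R}_{\ge0}\to\mathbb{R}_{\ge1}$ monotonically increasing, $g_0(0)=1$, $g_0(r_1+r_2)\le g_0(r_1)g_0(r_2)$. $B^*(x)$ denotes the $g$-smooth sensitivity of $f$ at $x$. *)

(* Defs.v *)
From HB Require Import structures.
From mathcomp Require Import all_boot all_order all_algebra.
From mathcomp Require Import all_classical all_reals all_analysis.
Set Implicit Arguments. Unset Strict Implicit. Unset Printing Implicit Defensive.
Import Order.TTheory GRing.Theory Num.Theory.
Local Open Scope ring_scope.
Local Open Scope classical_set_scope.

Definition edot (R : realType) (d : nat) (u v : 'rV[R]_d) : R :=
  \sum_(i < d) u ord0 i * v ord0 i.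

Definition enorm (R : realType) (d : nat) (u : 'rV[R]_d) : R :=
  Num.sqrt (edot u u).

(* g0 : R_{>=0} -> R_{>=1}, monotonically increasing, g0 0 = 1,
   submultiplicative. Only the values on [0, +oo) matter. *)
Definition smooth_growth0 (R : realType) (g0 : R -> R) : Prop :=
  [/\ (forall r, 0 <= r -> 1 <= g0 r),
      (forall r s, 0 <= r -> r <= s -> g0 r <= g0 s),
      g0 0 = 1 &
      (forall r1 r2, 0 <= r1 -> 0 <= r2 -> g0 (r1 + r2) <= g0 r1 * g0 r2)].

Definition growth (R : realType) (d : nat) (g0 : R -> R) (x x' : 'rV[R]_d) : R :=
  g0 (enorm (x - x')).

(* g-smooth sensitivity of f at x (as an extended real, the supremum may be +oo):
   B*(x) = sup_{w <> z} |f w - f z| / (||w - z|| g(x, z)). *)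
Definition smooth_sens (R : realType) (d : nat) (g0 : R -> R)
  (f : 'rV[R]_d -> R) (x : 'rV[R]_d) : \bar R :=
  ereal_sup [set r : \bar R | exists w z : 'rV[R]_d, w != z /\
     r = ((`|f w - f z| / (enorm (w - z) * growth g0 x z))%:E)].

(* Main.v *)
Require Import Defs.
From HB Require Import structures.
From mathcomp Require Import all_boot all_order all_algebra.
From mathcomp Require Import all_classical all_reals all_analysis.
From mathcomp Require Import lra ring.
Import Order.TTheory GRing.Theory Num.Theory.
Local Open Scope ring_scope.

Section H.
Variables (R : realType) (d : nat).
Implicit Types (u v w : 'rV[R]_d).

Lemma edotC u v : edot u v = edot v u.
Proof. by apply: eq_bigr => i _; rewrite mulrC. Qed.

Lemma edotDl u v w : edot (u + v) w = edot u w + edot v w.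
Proof. rewrite /edot -big_split; apply: eq_bigr => i _; by rewrite mxE mulrDl. Qed.

Lemma edotZl (a : R) u v : edot (a *: u) v = a * edot u v.
Proof. rewrite /edot mulr_sumr; apply: eq_bigr => i _; by rewrite mxE mulrA. Qed.

Lemma edotNl u v : edot (- u) v = - edot u v.
Proof. by rewrite -scaleN1r edotZl mulN1r. Qed.

Lemma edotDr u v w : edot w (u + v) = edot w u + edot w v.
Proof. by rewrite edotC edotDl !(edotC w). Qed.

Lemma edotZr (a : R) u v : edot v (a *: u) = a * edot v u.
Proof. by rewrite edotC edotZl edotC. Qed.

Lemma edotNr u v : edot v (- u) = - edot v u.
Proof. by rewrite edotC edotNl edotC. Qed.

Lemma edot_ge0 u : 0 <= edot u u.
Proof. by apply: sumr_ge0 => i _; rewrite -expr2 sqr_ge0. Qed.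

Lemma enorm_ge0 u : 0 <= enorm u.
Proof. exact: sqrtr_ge0. Qed.

Lemma enorm_sqr u : enorm u ^+ 2 = edot u u.
Proof. by rewrite sqr_sqrtr // edot_ge0. Qed.

Lemma enormZ (a : R) u : enorm (a *: u) = `|a| * enorm u.
Proof.
rewrite /enorm edotZl edotZr mulrA -expr2 sqrtrM ?sqr_ge0 //.
by rewrite sqrtr_sqr.
Qed.

Lemma enormN u : enorm (- u) = enorm u.
Proof. by rewrite -scaleN1r enormZ normrN1 mul1r. Qed.

Lemma enormB u v : enorm (u - v) = enorm (v - u).
Proof. by rewrite -enormN opprB. Qed.

Lemma CS u v : `|edot u v| <= enorm u * enorm v.
Proof.
have [v0|vpos] := eqVneq (edot v v) 0.
  have hv : forall i, v ord0 i = 0.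
    move=> i; apply/eqP; rewrite -sqrf_eq0 expr2; apply/eqP.
    move/eqP: v0; rewrite /edot psumr_eq0; last by move=> j _; rewrite -expr2 sqr_ge0.
    by move/allP/(_ i (mem_index_enum _))/implyP/(_ isT)/eqP.
  have -> : edot u v = 0 by rewrite /edot big1 // => i _; rewrite hv mulr0.
  by rewrite normr0 mulr_ge0 // enorm_ge0.
have vp : 0 < edot v v by rewrite lt_def vpos edot_ge0.
set t := edot u v / edot v v.
have h := edot_ge0 (u - t *: v).
rewrite !(edotDl, edotDr, edotNl, edotNr, edotZl, edotZr) (edotC v u) in h.
have key : edot u v ^+ 2 <= edot u u * edot v v.
  have e : t * edot v v = edot u v by rewrite /t mulfVK.
  have : 0 <= (edot u u - t * edot u v) * edot v v.
    by apply: mulr_ge0 => //; move: h; rewrite e; lra.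
  rewrite mulrBl -mulrA (mulrC (edot u v)) mulrA e; lra.
rewrite -sqrtr_sqr /enorm -sqrtrM ?edot_ge0 //.
by apply: ler_wsqrtr.
Qed.

End H.

Theorem mainTheorem14 (R : realType) (d : nat) (beta0 : R) (beta : 'rV[R]_d)
  (f0 : R -> R) (g0 : R -> R) (x wstar zstar : 'rV[R]_d) :
  enorm beta != 0 ->
  smooth_growth0 g0 ->
  let f := fun y : 'rV[R]_d => f0 (beta0 + edot beta y) in
  wstar != zstar ->
  smooth_sens g0 f x =
    ((`|f wstar - f zstar| / (enorm (wstar - zstar) * growth g0 x zstar))%:E) ->
  exists a c : R,
    let zc := x + (c / enorm beta) *: beta in
    let wa := zc + (a / enorm beta) *: beta in
    a != 0 /\
    (smooth_sens g0 f x <=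
      ((`|f wa - f zc| / (enorm (wa - zc) * growth g0 x zc))%:E))%E.
Proof.
move=> nb0 [g1 gmon g00 _] f neq hB.
set nb := enorm beta.
have nbp : 0 < nb by rewrite lt_def nb0 enorm_ge0.
have nbu : nb != 0 := nb0.
have shift : forall y k, edot beta (y + (k / nb) *: beta) = edot beta y + k * nb.
  move=> y k; rewrite edotDr edotZr -enorm_sqr -/nb; congr (_ + _).
  by rewrite expr2 mulrA divfK.
have lin : forall y z, edot beta (y - z) = edot beta y - edot beta z.
  by move=> y z; rewrite edotDr edotNr.
set e := edot beta (wstar - zstar).
set c := edot beta (zstar - x) / nb.
have fz : f (x + (c / nb) *: beta) = f zstar.
  by rewrite /f shift /c divfK // lin; congr (f0 (_ + _)); ring.
have hpos : forall y, 0 < growth g0 x y.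
  by move=> y; apply: (lt_le_trans ltr01); apply: g1; exact: enorm_ge0.
have [e0|en0] := eqVneq e 0.
  exists 1, 0 => zc wa; split; first exact: oner_neq0.
  have fw : f wstar = f zstar.
    by rewrite /f; congr (f0 (_ + _)); apply/eqP; rewrite -subr_eq0 -lin -/e e0.
  rewrite hB fw subrr normr0 mul0r lee_fin.
  by rewrite divr_ge0 // mulr_ge0 ?enorm_ge0 // ltW // hpos.
exists (e / nb), c => zc wa; split.
  by rewrite mulf_neq0 // invr_eq0.
have fw : f wa = f wstar.
  rewrite /f /wa shift /zc shift /c /e !divfK // !lin.
  by congr (f0 (_ + _)); ring.
have dwz : enorm (wa - zc) = `|e| / nb.
  by rewrite /wa (addrC zc) addrK enormZ normrM normfV (gtr0_norm nbp) -/nb divfK // normrM normfV (gtr0_norm nbp) //.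
have gz : growth g0 x zc <= growth g0 x zstar.
  rewrite /growth /zc opprD addrA subrr add0r enormN enormZ normrM normfV.
  rewrite (gtr0_norm nbp) -/nb divfK // /c normrM normfV (gtr0_norm nbp).
  apply: gmon; first by rewrite divr_ge0 // ltW.
  rewrite enormB ler_pdivrMr // mulrC; exact: CS.
have dle : `|e| / nb <= enorm (wstar - zstar).
  by rewrite ler_pdivrMr // mulrC; exact: CS.
have epos : 0 < `|e| / nb by rewrite divr_gt0 // normr_gt0.
rewrite hB lee_fin fw -fz -/zc dwz.
apply: ler_wpM2l; first exact: normr_ge0.
rewrite lef_pV2 ?posrE ?mulr_gt0 ?hpos ?normr_gt0 ?invr_gt0 //; last exact: (lt_le_trans epos dle).
by apply: ler_pM => //; [exact: ltW | exact: ltW (hpos _)].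
Qed.
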